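(* Every vertex $v\in V$ belongs to at most $O(D\log n)$ of the sets $\mathsf{LDS}(x,y)$, taken over all independent pairs $(x,y)$.
   Context: $G=(V,E)$ is a connected $n$-vertex graph of diameter $D$ with no cut vertex, $T$ a BFS tree rooted at $s$, $\pi(u,v)$ the $T$-path, $T_x$ the subtree at $x$, $V_x=V(T_x)\setminus\{x\}$. The heavy child of a non-leaf vertex is the child with the largest subtree (ties broken consistently); other children are light. $\mathsf{LD}(x)$, the light descendants of $x$, is the union of $V(T_{x'})$ over light children $x'$ of $x$. $\mathcal{C}_x$ is the set of connected components of $G[V_x]$ and $C_{x,v}$ the one containing $v$. For each $C\in\mathcal{C}_x$ a fixed edge $(u_C,v_C)\in E$ with $v_C\in C$, $u_C\notin V(T_x)$ is chosen and $\pi_x(s,C)=\pi(s,u_C)\circ(u_C,v_C)$. A pair $x,y$ is independent if neither is a $T$-ancestor of the other. For an independent pair, $\mathsf{LDS}(x,y)=\{v\in\mathsf{LD}(x): y\in\pi_x(s,C_{x,v})\}$. *)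

(* Defs.v *)
From mathcomp Require Import all_boot.
Set Implicit Arguments. Unset Strict Implicit. Unset Printing Implicit Defensive.

(* Simple graph on the vertex type T (V = T, n = #|T|) with adjacency adj. *)
Definition simple_graph (T : finType) (adj : rel T) : Prop :=
  symmetric adj /\ irreflexive adj.

Definition connected_graph (T : finType) (adj : rel T) : Prop :=
  forall u v, connect adj u v.

Definition del_vertex (T : finType) (adj : rel T) (z : T) : rel T :=
  [rel a b | [&& adj a b, a != z & b != z]].

Definition no_cut_vertex (T : finType) (adj : rel T) : Prop :=
  forall z u w, u != z -> w != z -> connect (del_vertex adj z) u w.

Fixpoint within (T : finType) (adj : rel T) (k : nat) (u v : T) : bool :=
  if k is k'.+1 then (u == v) || [exists w, adj u w && within adj k' w v]
  else u == v.

(* graph distance (for connected graphs it is < #|T|) *)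
Definition dist (T : finType) (adj : rel T) (u v : T) : nat :=
  \big[minn/#|T|]_(k < #|T|.+1 | within adj k u v) k.

Definition diameter (T : finType) (adj : rel T) : nat :=
  \max_(u : T) \max_(v : T) dist adj u v.

(* par : parent function of a rooted spanning tree (par s = s).
   bfs_tree: par is the tree produced by a breadth-first search from s,
   where ord is the order in which vertices are discovered (enqueued):
   the parent of v is its earliest-discovered neighbour, which is
   discovered before v, and children of earlier-discovered parents are
   discovered earlier (FIFO queue). *)
Definition bfs_tree (T : finType) (adj : rel T) (s : T) (par : T -> T) : Prop :=
  par s = s /\
  exists ord : T -> nat,
    injective ord /\
    (forall v, v != s ->
       [/\ adj v (par v), ord (par v) < ord v &
           forall w, adj v w -> ord (par v) <= ord w]) /\
    (forall u w, u != s -> w != s -> ord (par u) < ord (par w) -> ord u < ord w).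

(* x is a T-ancestor of y (reflexive: x is an ancestor of itself) *)
Definition anc (T : finType) (par : T -> T) (x y : T) : bool := fconnect par y x.

Definition subtree (T : finType) (par : T -> T) (x : T) : {set T} :=
  [set y | anc par x y].

Definition Vx (T : finType) (par : T -> T) (x : T) : {set T} :=
  subtree par x :\ x.

Definition child (T : finType) (s : T) (par : T -> T) (c x : T) : bool :=
  (c != s) && (par c == x).

Definition heavy_choice (T : finType) (s : T) (par : T -> T) (h : T -> T) : Prop :=
  forall x c, child s par c x ->
    child s par (h x) x /\ #|subtree par c| <= #|subtree par (h x)|.

Definition LD (T : finType) (s : T) (par : T -> T) (h : T -> T) (x : T) : {set T} :=
  \bigcup_(c | child s par c x && (c != h x)) subtree par c.

Definition comp (T : finType) (adj : rel T) (par : T -> T) (x v : T) : {set T} :=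
  [set w | connect [rel a b | [&& adj a b, a \in Vx par x & b \in Vx par x]] v w].

(* ec x C = (u_C, v_C): the fixed edge for component C of G[V_x] *)
Definition edge_choice (T : finType) (adj : rel T) (s : T) (par : T -> T)
    (ec : T -> {set T} -> T * T) : Prop :=
  forall x v, x != s -> v \in Vx par x ->
    let C := comp adj par x v in
    [/\ adj (ec x C).1 (ec x C).2, (ec x C).2 \in C &
        (ec x C).1 \notin subtree par x].

(* vertex set of pi_x(s, C) = pi(s, u_C) o (u_C, v_C) *)
Definition on_pix (T : finType) (par : T -> T) (ec : T -> {set T} -> T * T)
    (x : T) (C : {set T}) (y : T) : bool :=
  anc par y (ec x C).1 || (y == (ec x C).2).

Definition independent (T : finType) (par : T -> T) (x y : T) : bool :=
  ~~ anc par x y && ~~ anc par y x.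

Definition LDS (T : finType) (adj : rel T) (s : T) (par : T -> T) (h : T -> T)
    (ec : T -> {set T} -> T * T) (x y : T) : {set T} :=
  [set v in LD s par h x | on_pix par ec x (comp adj par x v) y].

Definition LDS_count (T : finType) (adj : rel T) (s : T) (par : T -> T) (h : T -> T)
    (ec : T -> {set T} -> T * T) (v : T) : nat :=
  #|[set p : T * T | independent par p.1 p.2 && (v \in LDS adj s par h ec p.1 p.2)]|.

(* Main.v *)
Require Import Defs.
From mathcomp Require Import all_boot.
Set Implicit Arguments. Unset Strict Implicit. Unset Printing Implicit Defensive.

Lemma fconnect_step (T : finType) (f : T -> T) x y :
  fconnect f x y = (y == x) || fconnect f (f x) y.
Proof.
apply/idP/idP.
- move=> /iter_findex; case: (findex _ _ _) => [/= ->|n]; first by rewrite eqxx.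
  by rewrite iterSr => <-; rewrite fconnect_iter orbT.
- case/orP => [/eqP->|H]; first exact: connect0.
  exact: connect_trans (fconnect1 f x) H.
Qed.

Lemma fconnect_chain (T : finType) (f : T -> T) z a b :
  fconnect f z a -> fconnect f z b -> fconnect f a b || fconnect f b a.
Proof.
move=> /iter_findex Ha /iter_findex Hb.
move: Ha Hb; set i := findex _ z a; set j := findex _ z b => Ha Hb.
case: (leqP i j) => ij.
- by rewrite -Hb -Ha -(subnK ij) iterD fconnect_iter.
- by rewrite -Hb -Ha -(subnK (ltnW ij)) iterD fconnect_iter orbT.
Qed.

Section Tree.
Variables (T : finType) (adj : rel T) (s : T) (par h : T -> T) (ord : T -> nat).
Hypothesis ps : par s = s.
Hypothesis ordinj : injective ord.
Hypothesis bfs1 : forall v, v != s ->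
  [/\ adj v (par v), ord (par v) < ord v & forall w, adj v w -> ord (par v) <= ord w].
Hypothesis bfs2 : forall u w, u != s -> w != s -> ord (par u) < ord (par w) -> ord u < ord w.
Hypothesis sym : symmetric adj.

Lemma ord_par v : ord (par v) <= ord v.
Proof. case: (eqVneq v s) => [->|ns]; first by rewrite ps. by case: (bfs1 ns) => _ /ltnW. Qed.

Lemma ord_lt v : v != s -> ord (par v) < ord v.
Proof. by case/bfs1. Qed.

Lemma fconnect_ord x y : fconnect par x y -> ord y <= ord x.
Proof.
move=> /iter_findex <-; elim: (findex _ _ _) => //= n IH.
exact: leq_trans (ord_par _) IH.
Qed.

Lemma fconnect_s x : fconnect par x s.
Proof.
have [k] := ubnP (ord x); elim: k x => // k IH x lt.
case: (eqVneq x s) => [->|ns]; first exact: connect0.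
apply: connect_trans (fconnect1 par x) _; apply: IH.
exact: leq_trans (ord_lt ns) _.
Qed.

Lemma fconnect_from_s y : fconnect par s y -> y = s.
Proof.
move=> /iter_findex <-; elim: (findex _ _ _) => //= n ->; exact: ps.
Qed.

Lemma ord_s_le u : ord s <= ord u.
Proof. exact: fconnect_ord (fconnect_s u). Qed.

Lemma not_anc_par c : c != s -> ~~ fconnect par (par c) c.
Proof.
move=> ns; apply/negP => /fconnect_ord; rewrite leqNgt; by rewrite ord_lt.
Qed.

Definition A u := [set a | fconnect par u a].

Lemma inA u : u \in A u.
Proof. by rewrite inE connect0. Qed.

Lemma A_gt0 u : 0 < #|A u|.
Proof. by apply/card_gt0P; exists u; exact: inA. Qed.

Lemma A_s : A s = [set s].
Proof.
by apply/setP => y; rewrite !inE; apply/idP/eqP => [/fconnect_from_s|->] //; exact: connect0.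
Qed.

Lemma cardA_s : #|A s| = 1.
Proof. by rewrite A_s cards1. Qed.

Lemma cardA u : u != s -> #|A u| = (#|A (par u)|).+1.
Proof.
move=> ns; have -> : A u = u |: A (par u).
  by apply/setP => y; rewrite !inE fconnect_step.
by rewrite cardsU1 inE not_anc_par.
Qed.

Lemma ordA n u w : #|A w| <= n -> ord u <= ord w -> #|A u| <= #|A w|.
Proof.
elim: n u w => [|n IH] u w; first by rewrite leqNgt A_gt0.
move=> Hn Ho.
case: (eqVneq w s) => [ews|nws].
  have eus : u = s.
    apply: ordinj; apply/eqP; rewrite eqn_leq ord_s_le andbT; by rewrite -ews.
  by rewrite eus ews.
case: (eqVneq u s) => [->|nus]; first by rewrite cardA_s; exact: (A_gt0 w).
rewrite (cardA nus) (cardA nws) ltnS; apply: (IH).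
  by move: Hn; rewrite (cardA nws).
rewrite leqNgt; apply/negP => /(bfs2 nws nus); by rewrite ltnNge Ho.
Qed.

Lemma adjA v w : adj v w -> #|A v| <= (#|A w|).+1.
Proof.
move=> vw; case: (eqVneq v s) => [->|nvs]; first by rewrite cardA_s.
rewrite (cardA nvs) ltnS; apply: (@ordA #|A w|) => //.
by case: (bfs1 nvs) => _ _ ->.
Qed.

Lemma withinA k b c : within adj k b c -> #|A c| <= #|A b| + k.
Proof.
elim: k b => [|k IH] b /=; first by move/eqP->; rewrite addn0.
case/orP => [/eqP->|/existsP[w /andP[bw wc]]]; first exact: leq_addr.
apply: leq_trans (IH _ wc) _; rewrite addnS -addSn leq_add2r.
by apply: adjA; rewrite sym.
Qed.

Lemma distA u : #|A u| <= (dist adj s u).+1.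
Proof.
rewrite /dist; apply: (big_ind (fun x => #|A u| <= x.+1)).
- exact: leq_trans (max_card _) (leqnSn _).
- by move=> x y hx hy; rewrite /minn; case: ifP.
- move=> k wk; have := withinA wk; by rewrite cardA_s add1n.
Qed.

Lemma A_diam u : #|A u| <= (diameter adj).+1.
Proof.
apply: leq_trans (distA u) _; rewrite ltnS /diameter.
have H1 := @leq_bigmax _ (fun v => dist adj s v) u.
have H2 := @leq_bigmax _ (fun u => \max_v dist adj u v) s.
exact: leq_trans H1 H2.
Qed.

Hypothesis hc : heavy_choice s par h.

Lemma LD_mem v x : (v \in LD s par h x) =
  [exists c, [&& child s par c x, c != h x & fconnect par v c]].
Proof.
rewrite /LD; apply/idP/idP => [/bigcupP[c /andP[ch nh] vc]|/existsP[c /and3P[ch nh vc]]].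
  by apply/existsP; exists c; rewrite ch nh; move: vc; rewrite inE.
by apply/bigcupP; exists c; rewrite ?ch ?nh // inE.
Qed.

Definition X v := [set x | v \in LD s par h x].

Lemma child_uniq c c' p : child s par c p -> child s par c' p -> fconnect par c c' -> c = c'.
Proof.
move=> /andP[ns /eqP pc] /andP[ns' /eqP pc']; rewrite fconnect_step => /orP[/eqP -> //|].
by rewrite pc -pc' => H; move: (not_anc_par ns'); rewrite H.
Qed.

Lemma X_s : X s = set0.
Proof.
apply/setP => x; rewrite !inE LD_mem; apply/negbTE/negP => /existsP[c /and3P[/andP[ns _] _ sc]].
by move: ns; rewrite (fconnect_from_s sc) eqxx.
Qed.

Lemma X_mem w x : w != s ->
  (x \in X w) = ((x == par w) && (h (par w) != w)) || (x \in X (par w)).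
Proof.
move=> nws; rewrite !inE !LD_mem; apply/existsP/orP.
- move=> [c /and3P[ch nh wc]]; move: wc; rewrite fconnect_step => /orP[/eqP ec | pc].
    left; move: ch nh; rewrite ec => /andP[_ /eqP <-]; by rewrite eqxx eq_sym.
  by right; apply/existsP; exists c; rewrite ch nh pc.
- move=> [/andP[/eqP-> nh] | /existsP[c /and3P[ch nh pc]]].
    by exists w; rewrite /child nws eqxx eq_sym nh connect0.
  exists c; rewrite ch nh /=; exact: connect_trans (fconnect1 _ _) pc.
Qed.

Lemma notin_X x : x \notin X x.
Proof.
rewrite inE LD_mem; apply/negP => /existsP[c /and3P[/andP[ns /eqP pc] _ xc]].
by move: (not_anc_par ns); rewrite pc xc.
Qed.

Lemma cardX w : w != s -> #|X w| = (h (par w) != w) + #|X (par w)|.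
Proof.
move=> nws; have [eh|nh] := eqVneq (h (par w)) w => /=.
  suff -> : X w = X (par w) by [].
  apply/setP => x; by rewrite X_mem // eh eqxx andbF.
have -> : X w = par w |: X (par w).
  by apply/setP => x; rewrite X_mem // in_setU1 nh andbT.
by rewrite cardsU1 notin_X.
Qed.

Lemma sub_par w : subtree par w \subset subtree par (par w).
Proof. apply/subsetP => y; rewrite !inE => H; exact: connect_trans H (fconnect1 _ _). Qed.

Lemma sub_light p w : child s par w p -> w != h p ->
  #|subtree par w| + #|subtree par w| <= #|subtree par p|.
Proof.
move=> ch nh; have [chp le] := hc ch.
have dis : subtree par w :&: subtree par (h p) = set0.
  apply/setP => z; rewrite !inE; apply/negP => /andP[zw zh].
  case/orP: (fconnect_chain zw zh) => H.
    by move: nh; rewrite (child_uniq ch chp H) eqxx.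
  by move: nh; rewrite (child_uniq chp ch H) eqxx.
apply: (@leq_trans (#|subtree par w| + #|subtree par (h p)|)); first by rewrite leq_add2l.
rewrite -cardsUI dis cards0 addn0; apply: subset_leq_card.
move: ch chp => /andP[_ /eqP pw] /andP[_ /eqP ph].
by apply/subsetP => y; rewrite !inE => /orP[] H;
  [rewrite -pw | rewrite -ph]; exact: connect_trans H (fconnect1 _ _).
Qed.

Lemma X_bound n w : #|A w| <= n -> 2 ^ #|X w| * #|subtree par w| <= #|T|.
Proof.
elim: n w => [|n IH] w; first by rewrite leqNgt A_gt0.
move=> Hn; case: (eqVneq w s) => [->|nws].
  by rewrite X_s cards0 expn0 mul1n; exact: max_card.
have Hp : #|A (par w)| <= n by move: Hn; rewrite cardA.
have chw : child s par w (par w) by rewrite /child nws eqxx.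
rewrite cardX //; have [eh|nh] := eqVneq (h (par w)) w => /=.
  rewrite add0n; apply: leq_trans (IH _ Hp); rewrite leq_mul2l.
  by rewrite subset_leq_card ?orbT // sub_par.
rewrite add1n expnS -mulnA mulnCA; apply: leq_trans (IH _ Hp); rewrite leq_mul2l mul2n -addnn.
by rewrite sub_light ?orbT // eq_sym.
Qed.

Lemma X_log v : #|X v| <= trunc_log 2 #|T|.
Proof.
apply: trunc_log_max => //; apply: leq_trans (@X_bound _ v (leqnn _)).
rewrite leq_pmulr // card_gt0; apply/set0Pn; exists v; by rewrite inE; apply: connect0.
Qed.

Variable ecf : T -> {set T} -> T * T.
Hypothesis ecH : edge_choice adj s par ecf.

Lemma LD_Vx v x : v \in LD s par h x -> v \in Vx par x.
Proof.
rewrite LD_mem => /existsP[c /and3P[/andP[ns /eqP pc] _ vc]].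
rewrite /Vx in_setD1 inE; apply/andP; split.
  apply/eqP => evx; move: (not_anc_par ns); by rewrite pc -evx vc.
rewrite /anc -pc; exact: connect_trans vc (fconnect1 _ _).
Qed.

Lemma comp_Vx x v w : v \in Vx par x -> w \in Defs.comp adj par x v -> w \in Vx par x.
Proof.
move=> vV; rewrite inE => /connectP[p pth ->]; move: pth.
case/lastP: p => [//|q z]; rewrite rcons_path last_rcons => /andP[_ /=].
by case/and3P.
Qed.

Lemma Y_bound x v : v \in LD s par h x ->
  #|[set y | independent par x y && (v \in LDS adj s par h ecf x y)]| <= diameter adj.
Proof.
move=> vx; have vV := LD_Vx vx.
case: (eqVneq x s) => [exs|xs].
  rewrite (_ : [set y | _] = set0) ?cards0 //; apply/setP => y; rewrite !inE.
  by rewrite /independent /anc exs fconnect_s.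
have := ecH xs vV; rewrite /= => -[_ vcC _].
set C := Defs.comp adj par x v in vcC *.
apply: (@leq_trans #|A (ecf x C).1 :\ s|).
  apply: subset_leq_card; apply/subsetP => y.
  rewrite !inE /LDS ?inE vx /= /on_pix /independent /anc -/C.
  move=> /andP[/andP[nxy nyx] /orP[uy|/eqP ey]].
    rewrite uy andbT; apply/eqP => eys; by move: nyx; rewrite eys fconnect_s.
  move: (comp_Vx vV vcC); rewrite -ey /Vx in_setD1 inE => /andP[_ H].
  by move: H nxy; rewrite /anc => ->.
have H := A_diam (ecf x C).1; move: H; rewrite (cardsD1 s (A _)).
have sA : s \in A (ecf x C).1 by rewrite inE; apply: fconnect_s.
by rewrite sA add1n ltnS.
Qed.

Lemma sum_bool_card (I : finType) (P : pred I) : \sum_i (P i : nat) = #|[set i | P i]|.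
Proof. rewrite -sum1_card [RHS]big_mkcond /=; apply: eq_bigr => i _; rewrite inE; by case: (P i). Qed.

Lemma count_bound v : LDS_count adj s par h ecf v <= #|X v| * diameter adj.
Proof.
rewrite /LDS_count; set S := [set p : T * T | _].
have E : #|S| = \sum_(p : T * T) (((p.1, p.2) \in S) : nat).
  by rewrite sum_bool_card; apply: eq_card => -[a b]; rewrite [RHS]inE.
rewrite E -(pair_bigA _ (fun x y => (((x, y) \in S) : nat))) /=.
rewrite -sum_nat_const [X in _ <= X]big_mkcond /=; apply: leq_sum => x _.
case: ifP => xX.
  have xv : v \in LD s par h x by move: xX; rewrite inE.
  rewrite sum_bool_card; apply: leq_trans (Y_bound xv).
  by apply: subset_leq_card; apply/subsetP => y; rewrite !inE.
rewrite big1 // => y _; rewrite inE /LDS inE.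
by move: xX; rewrite inE => ->; rewrite andbF.
Qed.

End Tree.

Theorem mainTheorem7 :
  exists c : nat,
  forall (T : finType) (adj : rel T) (s : T) (par h : T -> T)
         (ec : T -> {set T} -> T * T),
    simple_graph adj ->
    connected_graph adj ->
    no_cut_vertex adj ->
    bfs_tree adj s par ->
    heavy_choice s par h ->
    edge_choice adj s par ec ->
    forall v : T,
      LDS_count adj s par h ec v <= c * diameter adj * trunc_log 2 #|T|.
Proof.
exists 1 => T adj s par h ec [sym _] _ _ [ps [ord [inj [b1 b2]]]] hc ecH v.
apply: leq_trans (count_bound h ps inj b1 b2 sym ecH v) _.
rewrite mul1n mulnC; apply: leq_mul => //.
exact: (X_log ps b1 hc v).
Qed.
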